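(* Let $m$ be an odd positive integer and $\ell=\lceil\log_2 m\rceil$. Suppose $m=2^Lh+1$ where $L\geq 3$ is an integer and $h$ is an odd positive integer. Then $\mathfrak K(m)<\left(1+\frac{2^{L+1}+4}{m}\right)2^\ell$.
   Context: The Thue–Morse word is $\mathbf t=\mathbf t_1\mathbf t_2\cdots$ where $\mathbf t_i\in\{0,1\}$ has the parity of the number of $1$'s in the binary expansion of $i-1$. For positive integers $\alpha\le\beta$, $\langle\alpha,\beta\rangle=\mathbf t_\alpha\cdots\mathbf t_\beta$. A $k$-anti-power is a word $w_1\cdots w_k$ with $w_1,\dots,w_k$ pairwise distinct words of equal length. For a positive integer $m$, $\mathfrak K(m)$ is the smallest positive integer $k$ such that the prefix $\langle 1,km\rangle$ of $\mathbf t$ is not a $k$-anti-power. *)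

(* Defs.v *)
From HB Require Import structures.
From mathcomp Require Import all_boot all_order all_algebra.
Set Implicit Arguments. Unset Strict Implicit. Unset Printing Implicit Defensive.

(* Number of 1's in the binary expansion of n (bits j < n suffice since n < 2^n). *)
Definition binary_ones (n : nat) : nat := \sum_(j < n) odd (n %/ 2 ^ j).

(* Thue-Morse word, 1-indexed: t_i = parity of number of 1's of i-1. *)
Definition tm (i : nat) : bool := odd (binary_ones i.-1).

Definition tm_factor (alpha beta : nat) : seq bool :=
  [seq tm i | i <- iota alpha (beta.+1 - alpha)].

Definition anti_power (k : nat) (w : seq bool) : bool :=
  (k %| size w) &&
  uniq [seq take (size w %/ k) (drop (j * (size w %/ k)) w) | j <- iota 0 k].

Definition K_pred (m : nat) : pred nat :=
  fun k => (0 < k) && ~~ anti_power k (tm_factor 1 (k * m)).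

Lemma seq_size_uniq_bound (m : nat) (s : seq (seq bool)) :
  uniq s -> all (fun x => size x == m) s -> size s <= 2 ^ m.
Proof.
move=> us alls.
pose f (x : seq bool) : m.-tuple bool := insubd (nseq_tuple m false) x.
have finj : {in s &, injective f}.
  move=> x y xs ys; rewrite /f => E.
  have := congr1 val E; rewrite !val_insubd.
  by move: (allP alls x xs) (allP alls y ys) => -> ->.
have u : uniq (map f s) by rewrite map_inj_in_uniq.
rewrite -(size_map f) -(card_uniqP u).
by apply: leq_trans (max_card _) _; rewrite card_tuple card_bool.
Qed.

Lemma K_exists (m : nat) : exists k, K_pred m k.
Proof.
exists (2 ^ m).+1; rewrite /K_pred /=; apply/negP => /andP [_ u].
have sz : size (tm_factor 1 ((2 ^ m).+1 * m)) = (2 ^ m).+1 * m.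
  by rewrite /tm_factor size_map size_iota subSS subn0.
move: u; rewrite sz mulKn // => u.
suff : (2 ^ m).+1 <= 2 ^ m by rewrite ltnn.
rewrite -{1}[(2 ^ m).+1](size_iota 0).
rewrite -(size_map (fun j => take m (drop (j * m) (tm_factor 1 ((2 ^ m).+1 * m))))).
apply: (seq_size_uniq_bound u).
apply/allP => x /mapP [j]; rewrite mem_iota add0n => jk ->.
rewrite size_take size_drop sz.
have : m <= (2 ^ m).+1 * m - j * m.
  by rewrite -mulnBl leq_pmull // subn_gt0.
by rewrite leq_eqVlt => /orP [/eqP <-|->] //; rewrite ltnn.
Qed.

Definition frakK (m : nat) : nat := ex_minn (K_exists m).

(* Main.v *)
Require Import Defs.
From mathcomp Require Import all_boot all_order all_algebra.
From mathcomp Require Import zify.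
Import Order.TTheory GRing.Theory Num.Theory.

Definition ones (N n : nat) : nat := \sum_(0 <= j < N) odd (n %/ 2 ^ j).

Lemma ones_ext N M n : n < 2 ^ N -> N <= M -> ones M n = ones N n.
Proof.
move=> nN NM; rewrite /ones (big_cat_nat (n:=N)) //=.
rewrite [X in _ + X]big1_seq ?addn0 // => j /andP[_]; rewrite mem_iota => /andP[Nj _].
rewrite divn_small //; apply: leq_trans nN _; exact: leq_pexp2l.
Qed.

Lemma binE N n : n < 2 ^ N -> binary_ones n = ones N n.
Proof.
move=> nN; have e : binary_ones n = ones n n by rewrite /ones big_mkord.
have hn : n < 2 ^ n by exact: ltn_expl.
rewrite e -(@ones_ext n (maxn N n) n hn (leq_maxr N n)).
exact: (@ones_ext N (maxn N n) n nN (leq_maxl N n)).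
Qed.

Lemma ones_S N n (b : bool) : ones N.+1 (b + 2 * n) = b + ones N n.
Proof.
rewrite /ones big_nat_recl //= expn0 divn1 oddD oddM /= ?andbF ?addbF oddb.
congr (_ + _); apply: eq_bigr => i _.
rewrite expnS divnMA; congr (odd (_ %/ _)).
by rewrite mulnC addnC divnMDl // divn_small ?addn0 //; case: b.
Qed.

Definition T n := odd (binary_ones n).

Lemma T_S (b : bool) n : T (b + 2 * n) = b (+) T n.
Proof.
have h1 : n < 2 ^ n by rewrite ltn_expl.
have h2 : b + 2 * n < 2 ^ n.+1.
  rewrite expnS; move: h1 (leq_b1 b); move: (2 ^ n) => p; lia.
by rewrite /T (binE _ _ h2) (binE _ _ h1) ones_S oddD oddb.
Qed.

Lemma T0 : T 0 = false.
Proof. by rewrite /T /binary_ones big_ord0. Qed.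

Lemma T_add k a b : a < 2 ^ k -> T (a + 2 ^ k * b) = T a (+) T b.
Proof.
elim: k a => [|k IH] a.
  by rewrite expn0 ltnS leqn0 => /eqP ->; rewrite mul1n add0n T0.
move=> ak.
have ea : a = odd a + 2 * a./2 by rewrite -[LHS]odd_double_half -mul2n.
have ha : a./2 < 2 ^ k.
  rewrite expnS in ak; move: ak (odd_double_half a); rewrite -mul2n; move: (2 ^ k) => p; lia.
have -> : a + 2 ^ k.+1 * b = odd a + 2 * (a./2 + 2 ^ k * b).
  rewrite expnS; move: (2 ^ k) => p; lia.
by rewrite T_S IH // [in RHS]ea T_S addbA.
Qed.
Lemma nth_w k m x : x < k * m -> nth false (tm_factor 1 (k * m)) x = T x.
Proof.
move=> xk; rewrite /tm_factor (nth_map 0); last by rewrite size_iota subSS subn0.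
by rewrite nth_iota ?subSS ?subn0 // /tm add1n.
Qed.

Lemma not_anti k m i j : i < k -> j < k -> i != j ->
  (forall r, r < m -> T (i * m + r) = T (j * m + r)) -> K_pred m k.
Proof.
move=> ik jk ij Hr.
have k0 : 0 < k by apply: leq_ltn_trans (leq0n i) ik.
rewrite /K_pred k0 /= /anti_power.
set w := tm_factor 1 (k * m).
have sw : size w = k * m by rewrite size_map size_iota subSS subn0.
rewrite sw mulKn //; apply/negP => /andP[_ u].
have hb : forall a, a < k -> m <= k * m - a * m.
  move=> a ak; rewrite -mulnBl; case: m {Hr w sw u} => // m'.
  by apply: leq_pmull; rewrite subn_gt0.
have eqb : take m (drop (i * m) w) = take m (drop (j * m) w).
  apply: (@eq_from_nth _ false).
    by rewrite !size_takel // size_drop sw hb.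
  move=> r; rewrite size_takel ?size_drop ?sw ?hb // => rm.
  rewrite !nth_take // !nth_drop !nth_w ?Hr //.
    by move: (hb j jk) rm; lia.
  by move: (hb i ik) rm; lia.
have := nth_uniq [::] (i := i) (j := j) _ _ u.
rewrite !size_map !size_iota => /(_ ik jk).
rewrite !(nth_map 0) ?size_iota // !nth_iota // !add0n eqb eqxx.
by move=> /esym /eqP e; rewrite e eqxx in ij.
Qed.

Lemma frakK_le m k : K_pred m k -> frakK m <= k.
Proof. by rewrite /frakK; case: ex_minnP => k0 _ min; apply: min. Qed.

Lemma T_1 : T 1 = true. Proof. by move: (T_S true 0) => /=; rewrite T0. Qed.
Lemma T_2 : T 2 = true. Proof. by move: (T_S false 1) => /=; rewrite T_1. Qed.
Lemma T_3 : T 3 = false. Proof. by move: (T_S true 1) => /=; rewrite T_1. Qed.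
Lemma T_4 : T 4 = true. Proof. by move: (T_S false 2) => /=; rewrite T_2. Qed.
Lemma T_5 : T 5 = false. Proof. by move: (T_S true 2) => /=; rewrite T_2. Qed.

Lemma block_shift m l q : 0 < m -> m <= 2 ^ l ->
  T (q + m) = T q -> T (q.+1 + m) = T q.+1 ->
  let i := (q * 2 ^ l + m.-1) %/ m in
  K_pred m (i + 2 ^ l + 1) /\ i * m < q * 2 ^ l + m.
Proof.
move=> m0 mP g0 g1 i.
have i1 : i * m <= q * 2 ^ l + m.-1 by apply: leq_trunc_div.
have i2 : q * 2 ^ l + m.-1 < i.+1 * m by apply: ltn_ceil.
rewrite mulSn in i2.
have P0 : 0 < 2 ^ l by rewrite expn_gt0.
have key : forall x qq, qq * 2 ^ l <= x < qq * 2 ^ l + 2 ^ l ->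
    T (qq + m) = T qq -> T (x + 2 ^ l * m) = T x.
  move=> x qq /andP[x1 x2] g.
  have -> : x = (x - qq * 2 ^ l) + 2 ^ l * qq by rewrite [2 ^ l * qq]mulnC subnK.
  have sl : x - qq * 2 ^ l < 2 ^ l by move: x1 x2; move: (qq * 2 ^ l) => a; lia.
  by rewrite -addnA -mulnDr !T_add // g.
split; last by move: i1 m0; lia.
apply: (@not_anti _ _ i (i + 2 ^ l)).
- by move: P0; move: (2 ^ l) => P; lia.
- by move: P0; move: (2 ^ l) => P; lia.
- by move: P0; move: (2 ^ l) => P; lia.
move=> r rm.
have -> : (i + 2 ^ l) * m + r = (i * m + r) + 2 ^ l * m by rewrite mulnDl; lia.
case: (ltnP (i * m + r) (q * 2 ^ l + 2 ^ l)) => hx.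
  by rewrite (key _ q) //; apply/andP; split => //; move: i2 rm; lia.
rewrite (key _ q.+1) //; apply/andP; split.
  by rewrite mulSn; move: hx; lia.
rewrite mulSn; move: i1 rm mP m0; move: (2 ^ l) (q * 2 ^ l) => P a; lia.
Qed.

Theorem lemma8 (m L h : nat) :
  odd m -> 0 < m -> m = 2 ^ L * h + 1 -> 3 <= L -> odd h -> 0 < h ->
  (((frakK m)%:R : rat) <
    (1 + ((2 ^ L.+1 + 4)%N%:R / m%:R)) * (2 ^ up_log 2 m)%N%:R)%R.
Proof.
move=> _ m0 em L3 oh h0.
set l := up_log 2 m; set c := (2 ^ L.+1 + 4)%N.
have mP : m <= 2 ^ l by apply: up_logP.
have gen : forall q, q + 2 <= c -> T (q + m) = T q -> T (q.+1 + m) = T q.+1 ->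
  (((frakK m)%:R : rat) < (1 + (c%:R / m%:R)) * (2 ^ l)%N%:R)%R.
  move=> q qc g0 g1.
  have [Kp ib] := block_shift m l q m0 mP g0 g1.
  set i := (q * 2 ^ l + m.-1) %/ m in Kp ib.
  have Kle := frakK_le m _ Kp.
  have nb : (i + 2 ^ l + 1) * m < (m + c) * 2 ^ l.
    have qc' : (q + 2) * 2 ^ l <= c * 2 ^ l by rewrite leq_mul2r qc orbT.
    rewrite !mulnDl in qc' *.
    move: ib qc' mP; rewrite [2 ^ l * m]mulnC mul1n.
    move: (i * m) (q * 2 ^ l) (c * 2 ^ l) (m * 2 ^ l) (2 ^ l) => a b d e P; lia.
  have -> : (1 + c%:R / m%:R)%R = ((m + c)%:R / m%:R : rat)%R.
    by rewrite natrD mulrDl divff // pnatr_eq0 -lt0n.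
  rewrite mulrAC ltr_pdivlMr ?ltr0n // -!natrM.
  apply: (le_lt_trans _ (_ : ((i + 2 ^ l + 1) * m)%:R < _)%R).
    by rewrite ler_nat leq_mul2r Kle orbT.
  by rewrite ltr_nat.
have L8 : 8 <= 2 ^ L by rewrite -[8]/(2 ^ 3) leq_pexp2l.
have TmE : forall q, T (q + m) = T (q.+1 + 2 ^ L * h) by move=> q; rewrite em; congr T; lia.
case Th : (T h).
  apply: (gen 3).
  - rewrite /c expnS; lia.
  - by rewrite TmE T_add ?Th ?T_4 ?T_3 //; lia.
  - by rewrite TmE T_add ?Th ?T_5 ?T_4 //; lia.
have [h' eh] : exists h', h = 1 + 2 * h'.
  by exists h./2; rewrite -[LHS]odd_double_half oh -mul2n.
have Th2 : T (h + 2) = ~~ T (h + 1).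
  have -> : h + 2 = true + 2 * h'.+1 by rewrite eh /=; lia.
  have -> : h + 1 = false + 2 * h'.+1 by rewrite eh /=; lia.
  by rewrite !T_S.
case Th1 : (T (h + 1)).
  apply: (gen (2 + 2 ^ L * 2)).
  - rewrite /c expnS; lia.
  - have -> : 2 + 2 ^ L * 2 + m = 3 + 2 ^ L * (h + 2) by rewrite em; lia.
    by rewrite !T_add ?Th2 ?Th1 ?T_3 ?T_2 //; lia.
  - have -> : (2 + 2 ^ L * 2).+1 + m = 4 + 2 ^ L * (h + 2) by rewrite em; lia.
    have -> : (2 + 2 ^ L * 2).+1 = 3 + 2 ^ L * 2 by lia.
    by rewrite !T_add ?Th2 ?Th1 ?T_4 ?T_3 ?T_2 //; lia.
apply: (gen (3 + 2 ^ L * 1)).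
- rewrite /c expnS; lia.
- have -> : 3 + 2 ^ L * 1 + m = 4 + 2 ^ L * (h + 1) by rewrite em; lia.
  by rewrite !T_add ?Th1 ?T_4 ?T_3 ?T_1 //; lia.
- have -> : (3 + 2 ^ L * 1).+1 + m = 5 + 2 ^ L * (h + 1) by rewrite em; lia.
  have -> : (3 + 2 ^ L * 1).+1 = 4 + 2 ^ L * 1 by lia.
  by rewrite !T_add ?Th1 ?T_5 ?T_4 ?T_1 //; lia.
Qed.
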